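(* Let $G$ be a graph on $[n]$ which is a noncrossing bond of itself (i.e. the partition of $[n]$ into the vertex sets of the connected components of $G$ is noncrossing). Then $NC_G$ is graded if and only if for every cover relation $H\lessdot H'$ in $NC_G$, the partition $\pi(H')$ is obtained from $\pi(H)$ by merging exactly two blocks. Moreover, when $NC_G$ is graded, its rank function is $\rho(H)=n-cc(H)$, where $cc(H)$ is the number of connected components of $H$.
   Context: All graphs are finite simple graphs with vertex set $[n]=\{1,\dots,n\}$; edges are written $ij$ with $i<j$. A spanning subgraph is identified with its edge set. A bond of $G$ is a spanning subgraph each of whose connected components is an induced subgraph of $G$. For a bond $H$, $\pi(H)$ is the set partition of $[n]$ whose blocks are the vertex sets of the connected components of $H$. A set partition is crossing if there are distinct blocks $B,B'$ and $a,c\in B$, $b,d\in B'$ with $a<b<c<d$, and noncrossing otherwise; a bond $H$ is noncrossing if $\pi(H)$ is. $NC_G$ is the poset of noncrossing bonds of $G$ ordered by inclusion of edge sets. *)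

(* Defs.v *)
From mathcomp Require Import all_boot.
Set Implicit Arguments. Unset Strict Implicit. Unset Printing Implicit Defensive.

(* Vertices are 'I_n (standing for [n] = {1..n}, shifted by one; order preserved).
   A graph / spanning subgraph is its edge set: a set of pairs (i,j) with i<j. *)
Definition edgeset (n : nat) := {set ('I_n * 'I_n)}.

Definition simple_graph n (G : edgeset n) : Prop :=
  forall e, e \in G -> (e.1 < e.2)%N.

Definition adj n (H : edgeset n) : rel 'I_n :=
  fun x y => ((x, y) \in H) || ((y, x) \in H).

Definition comp n (H : edgeset n) (x : 'I_n) : {set 'I_n} :=
  [set y | connect (adj H) x y].

Definition bpart n (H : edgeset n) : {set {set 'I_n}} :=
  [set comp H x | x in 'I_n].

Definition cc n (H : edgeset n) : nat := #|bpart H|.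

(* H is a bond of G: spanning subgraph of G whose components are induced
   subgraphs of G *)
Definition is_bond n (G H : edgeset n) : Prop :=
  H \subset G /\
  forall e, e \in G -> comp H e.1 = comp H e.2 -> e \in H.

Definition crossing n (P : {set {set 'I_n}}) : Prop :=
  exists B B' a b c d, [/\ B \in P, B' \in P, B != B',
    [/\ a \in B, c \in B, b \in B' & d \in B'] &
    [/\ (a < b)%N, (b < c)%N & (c < d)%N]].

Definition noncrossing n (P : {set {set 'I_n}}) : Prop := ~ crossing P.

Definition inNC n (G H : edgeset n) : Prop := is_bond G H /\ noncrossing (bpart H).

Definition covers n (G H H' : edgeset n) : Prop :=
  [/\ inNC G H, inNC G H', H \proper H' &
      forall K, inNC G K -> H \proper K -> K \proper H' -> False].

Definition is_rank_function n (G : edgeset n) (rho : edgeset n -> nat) : Prop :=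
  (forall H, inNC G H -> (forall K, inNC G K -> ~ (K \proper H)) -> rho H = 0)
  /\ (forall H H', covers G H H' -> rho H' = (rho H).+1).

Definition graded n (G : edgeset n) : Prop := exists rho, is_rank_function G rho.

Definition merges_two_blocks n (P P' : {set {set 'I_n}}) : Prop :=
  exists B1 B2, [/\ B1 \in P, B2 \in P, B1 != B2 &
    P' = (P :\: [set B1; B2]) :|: [set B1 :|: B2]].

(* Main.v *)
Require Import Defs.
From mathcomp Require Import all_boot zify.
Import Defs.
Set Implicit Arguments. Unset Strict Implicit. Unset Printing Implicit Defensive.

Section General.
Variable T : finType.

Lemma refine_lem (f g : T -> {set T}) :
  (forall z, z \in g z) -> (forall z w, w \in g z -> g w = g z) ->
  (forall z w, w \in f z -> f w = f z) -> (forall z, g z \subset f z) ->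
  #|[set f x | x in T]| <= #|[set g x | x in T]| /\
  (#|[set f x | x in T]| = #|[set g x | x in T]| -> forall z, f z = g z).
Proof.
move=> gr gc fc fg.
pose phi := fun S : {set T} => \bigcup_(w in S) f w.
have phig z : phi (g z) = f z.
  apply/setP => u; apply/bigcupP/idP.
    by case=> w wg uf; rewrite -(fc z w (subsetP (fg z) w wg)).
  by move=> uf; exists z.
have imf : [set f x | x in T] = [set phi x | x in [set g x | x in T]].
  by rewrite -imset_comp; apply: eq_imset => z /=; rewrite phig.
split; first by rewrite imf; exact: leq_imset_card.
move=> eqc z.
have inj : {in [set g x | x in T] &, injective phi}.
  by apply/imset_injP; rewrite -imf eqc.
apply/setP => w; apply/idP/idP => hw; last exact: (subsetP (fg z) w hw).
have e : phi (g w) = phi (g z) by rewrite !phig (fc z w hw).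
have := inj _ _ (imset_f _ (isT : w \in T)) (imset_f _ (isT : z \in T)) e.
by move=> <-.
Qed.

Lemma merge_card (f : T -> {set T}) B1 B2 :
  (forall z, z \in f z) -> (forall z w, w \in f z -> f w = f z) ->
  B1 \in [set f x | x in T] -> B2 \in [set f x | x in T] -> B1 != B2 ->
  #|([set f x | x in T] :\: [set B1; B2]) :|: [set B1 :|: B2]| =
     #|[set f x | x in T]| - 1 /\ 2 <= #|[set f x | x in T]|.
Proof.
move=> fr fc b1 b2 neq.
set P := [set f x | x in T].
have sub2 : [set B1; B2] \subset P.
  by apply/subsetP => S; rewrite in_set2 => /orP [] /eqP ->.
have c2 : #|[set B1; B2]| = 2 by rewrite cards2 neq.
have le2 : 2 <= #|P| by rewrite -c2 subset_leq_card.
have nin : B1 :|: B2 \notin P :\: [set B1; B2].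
  apply/negP; rewrite in_setD => /andP [ni /imsetP [z _ ez]].
  case/imsetP: b1 => x _ ex.
  have : f x = f z.
    apply: fc; rewrite -ez; apply/setUP; left; by rewrite ex fr.
  move=> efx; have e1 : B1 :|: B2 = B1 by rewrite ez -efx ex.
  by move: ni; rewrite in_set2 e1 eqxx.
split=> //.
rewrite setUC cardsU1 nin /= cardsD (setIidPr sub2) c2.
move: le2; case: #|P| => [|[|k]] // _; by rewrite add1n !subSS !subn0.
Qed.

Lemma merge_img (f g : T -> {set T}) x y :
  (forall z, g z = if (f z == f x) || (f z == f y) then f x :|: f y else f z) ->
  [set g z | z in T] =
    ([set f z | z in T] :\: [set f x; f y]) :|: [set f x :|: f y].
Proof.
move=> hg; apply/setP => S; apply/imsetP/idP.
  case=> z _ ->; rewrite hg; case: ifP => h.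
    by rewrite in_setU in_set1 eqxx orbT.
  by rewrite in_setU in_setD in_set2 h /= imset_f.
rewrite in_setU in_set1 in_setD in_set2 => /orP [/andP [hn /imsetP [z _ eS]] | /eqP ->].
  by exists z => //; rewrite hg -eS (negbTE hn).
by exists x => //; rewrite hg eqxx.
Qed.

End General.

Section Basic.
Variable n : nat.
Implicit Types H K G : edgeset n.

Lemma adj_sym H : symmetric (adj H).
Proof. by move=> x y; rewrite /adj orbC. Qed.

Lemma csym H : connect_sym (adj H).
Proof. exact: sym_connect_sym (adj_sym H). Qed.

Lemma comp_refl H z : z \in comp H z.
Proof. by rewrite inE connect0. Qed.

Lemma compP H z w : (w \in comp H z) = connect (adj H) z w.
Proof. by rewrite inE. Qed.

Lemma comp_eq H z w : w \in comp H z -> comp H w = comp H z.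
Proof.
rewrite compP => Hw; apply/setP => u; rewrite !compP.
apply/idP/idP => h; first exact: connect_trans Hw h.
by rewrite csym in Hw; exact: connect_trans Hw h.
Qed.

Lemma comp_eqP H z w : (comp H z == comp H w) = connect (adj H) z w.
Proof.
apply/eqP/idP; first by move=> E; rewrite -compP E comp_refl.
by move=> c; apply/esym/comp_eq; rewrite compP.
Qed.

Lemma adj_mono H K x y : K \subset H -> adj K x y -> adj H x y.
Proof.
move=> sub; rewrite /adj => /orP [h|h]; apply/orP; [left|right];
  exact: (subsetP sub).
Qed.

Lemma connect_mono H K x y : K \subset H -> connect (adj K) x y -> connect (adj H) x y.
Proof.
move=> sub; apply: connect_sub => a b hab; apply: connect1; exact: adj_mono hab.
Qed.

Lemma comp_sub H K z : K \subset H -> comp K z \subset comp H z.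
Proof. by move=> sub; apply/subsetP => w; rewrite !compP; apply: connect_mono. Qed.

Lemma cc_le H : cc H <= n.
Proof. by rewrite /cc /bpart (leq_trans (leq_imset_card _ _)) // card_ord. Qed.

Lemma edge_conn H e : e \in H -> connect (adj H) e.1 e.2.
Proof. by move=> eH; apply: connect1; rewrite /adj -surjective_pairing eH. Qed.

Lemma comp0 z : comp (set0 : edgeset n) z = [set z].
Proof.
apply/setP => w; rewrite compP inE; apply/idP/idP; last by move/eqP ->.
case/connectP => [[|y p]] /=; first by move=> _ ->.
by rewrite /adj !inE.
Qed.

Lemma cc0 : cc (set0 : edgeset n) = n.
Proof.
rewrite /cc /bpart card_imset ?card_ord //.
by move=> x y; rewrite !comp0 => /setP /(_ y); rewrite !inE eqxx => /eqP.
Qed.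

Lemma inNC0 G : simple_graph G -> inNC G set0.
Proof.
move=> sG; split; first split.
- exact: sub0set.
- move=> e eG; rewrite !comp0 => /setP /(_ e.2); rewrite !inE eqxx => /eqP E.
  by have := sG e eG; rewrite E ltnn.
- case=> B [B' [a [b [c [d [/imsetP [x _ ->] _ _ [ha hc _ _] [ab bc _]]]]]]].
  move: ha hc ab bc; rewrite comp0 !inE => /eqP -> /eqP -> ab bc.
  by move: (ltn_trans ab bc); rewrite ltnn.
Qed.

Lemma bond_mem G H e : is_bond G H -> (e \in H) = (e \in G) && connect (adj H) e.1 e.2.
Proof.
case=> sub bd; apply/idP/andP.
  by move=> eH; split; [exact: (subsetP sub) | exact: edge_conn].
case=> eG c; have h := bd e eG; apply: h; apply/eqP; by rewrite comp_eqP.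
Qed.

Lemma cc_strict G K L : is_bond G K -> is_bond G L -> K \proper L -> cc L < cc K.
Proof.
move=> bK bL /properP [sKL [e eL eK]].
have [le eqf] := @refine_lem _ (comp L) (comp K) (@comp_refl K) (@comp_eq K)
  (@comp_eq L) (fun z => comp_sub z sKL).
rewrite ltn_neqAle le andbT; apply/negP => /eqP E.
have := eqf E; move=> ef; move: eK; rewrite (bond_mem _ bK) (bond_mem _ bL) in eL *.
case/andP: eL => -> c /=; rewrite -comp_eqP -!ef comp_eqP c.
by [].
Qed.

End Basic.

Section Down.
Variable n : nat.
Variables G H : edgeset n.
Hypothesis sG : simple_graph G.
Hypothesis nH : inNC G H.
Variable e : 'I_n * 'I_n.
Hypothesis eH : e \in H.

Let r := e.1.
Let B := comp H r.

Fixpoint reach (k : nat) : {set 'I_n} :=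
  if k is k'.+1 then reach k' :|: [set w | [exists u in reach k', adj H u w]]
  else [set r].

Lemma reach_path x p k : path (adj H) x p -> x \in reach k ->
  last x p \in reach (k + size p).
Proof.
elim: p x k => [|y p IH] x k /=; first by rewrite addn0.
case/andP=> hxy hp xk; rewrite addnS -addSn; apply: IH => //.
rewrite /= in_setU; apply/orP; right; rewrite inE; apply/existsP; exists x.
by rewrite xk hxy.
Qed.

Lemma reach_mono k j : k <= j -> reach k \subset reach j.
Proof.
elim: j => [|j IH]; first by rewrite leqn0 => /eqP ->.
rewrite leq_eqVlt => /orP [/eqP -> //| kj].
by apply: subset_trans (IH kj) _; rewrite /= subsetUl.
Qed.

Lemma reach_conn k w : w \in reach k -> connect (adj H) r w.
Proof.
elim: k w => [|k IH] w /=; first by rewrite inE => /eqP ->.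
rewrite in_setU inE => /orP [/IH //| /existsP [u /andP [uk huw]]].
exact: connect_trans (IH u uk) (connect1 huw).
Qed.

Lemma B_reach : B \subset reach n.
Proof.
apply/subsetP => w; rewrite compP => /connectP [p hp ->].
case: (shortenP hp) => p' hp' up' _.
have : size p' < n.
  have := max_card (mem (r :: p')); rewrite card_ord (card_uniqP up') //.
have := reach_path hp' (_ : r \in reach 0).
rewrite add0n inE eqxx => /(_ isT) h sz.
exact: (subsetP (reach_mono (ltnW sz))).
Qed.

Lemma exB : exists k, B \subset reach k.
Proof. by exists n; exact: B_reach. Qed.

Lemma e2B : e.2 \in B.
Proof. by rewrite compP; apply: edge_conn. Qed.

Lemma e2r : e.2 != r.
Proof.
have : e \in G by apply: (subsetP nH.1.1).
by move/sG; rewrite /r ltn_neqAle eq_sym => /andP [].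
Qed.

Let m := ex_minn exB.

Lemma Bm : B \subset reach m.
Proof. by rewrite /m; case: (ex_minnP exB). Qed.

Lemma minm k : B \subset reach k -> m <= k.
Proof. by rewrite /m; case: (ex_minnP exB) => m' _ h; apply: h. Qed.

Lemma m_gt0 : 0 < m.
Proof.
rewrite lt0n; apply/eqP => m0; have := subsetP Bm _ e2B.
by rewrite m0 /= inE (negbTE e2r).
Qed.

Lemma exv : exists2 v, v \in B & v \notin reach m.-1.
Proof.
apply/exists_inP; rewrite -negb_forall_in; apply/negP => h.
have : B \subset reach m.-1 by apply/subsetP => x xB; move/forall_inP: h; apply.
move/minm; have := m_gt0; case: (m) => //= k _; by rewrite ltnn.
Qed.

Let v := let: exist2 v _ _ := sig2_eqW exv in v.

Lemma vB : v \in B.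
Proof. by rewrite /v; case: (sig2_eqW exv). Qed.

Lemma vnr : v \notin reach m.-1.
Proof. by rewrite /v; case: (sig2_eqW exv). Qed.

Definition K : edgeset n := [set f in H | (f.1 != v) && (f.2 != v)].

Lemma KH : K \subset H.
Proof. by apply/subsetP => f; rewrite inE => /andP []. Qed.

Lemma adjK a b : adj K a b = [&& adj H a b, a != v & b != v].
Proof.
rewrite /adj !inE /=.
by case: (a != v); case: (b != v); rewrite ?andbF ?andbT.
Qed.

Lemma reachK k : k <= m -> forall w, w \in reach k -> w != v -> connect (adj K) r w.
Proof.
elim: k => [|k IH] km w /=; first by rewrite inE => /eqP ->.
rewrite in_setU inE => /orP [wk wv| /existsP [u /andP [uk huw]] wv].
  exact: IH (ltnW km) w wk wv.
have uv : u != v.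
  apply/negP => /eqP ev; move: vnr; rewrite -ev.
  by rewrite (subsetP (reach_mono (_ : k <= m.-1)) u uk) //; move: km; case: (m).
apply: connect_trans (IH (ltnW km) u uk uv) (connect1 _).
by rewrite adjK huw uv wv.
Qed.

Lemma rB : r \in B.
Proof. exact: comp_refl. Qed.

Lemma compHB z : z \in B -> comp H z = B.
Proof. exact: comp_eq. Qed.

Lemma K1 : comp K v = [set v].
Proof.
apply/setP => w; rewrite compP inE; apply/idP/idP; last by move/eqP ->.
case/connectP => [[|y p]] /=; first by move=> _ ->.
by case/andP; rewrite adjK eqxx andbF.
Qed.

Lemma K2 z : z \in B -> z != v -> comp K z = B :\ v.
Proof.
move=> zB zv; apply/setP => w; rewrite in_setD1 compP; apply/idP/idP.
  move=> c; apply/andP; split.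
    apply/negP => /eqP ew; rewrite ew csym in c.
    by move: zv; rewrite -compP K1 inE in c; rewrite c.
  by rewrite -(compHB zB) compP; apply: connect_mono KH c.
case/andP=> wv wB.
have cw := reachK (leqnn m) (subsetP Bm w wB) wv.
have cz := reachK (leqnn m) (subsetP Bm z zB) zv.
by rewrite csym in cz; exact: connect_trans cz cw.
Qed.

Lemma pathK x p : path (adj H) x p -> v \notin comp H x -> path (adj K) x p.
Proof.
elim: p x => [|y p IH] x //=; case/andP=> hxy hp nv.
have xv : x != v by apply/negP => /eqP ex; rewrite ex comp_refl in nv.
have yx : comp H y = comp H x by apply: comp_eq; rewrite compP connect1.
have yv : y != v by apply/negP => /eqP ey; rewrite -yx ey comp_refl in nv.
by rewrite adjK hxy xv yv /=; apply: IH => //; rewrite yx.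
Qed.

Lemma K3 z : z \notin B -> comp K z = comp H z.
Proof.
move=> zB; apply/setP => w; rewrite !compP; apply/idP/idP; first exact: connect_mono KH.
have nv : v \notin comp H z.
  apply/negP => vz; have := comp_eq vz; rewrite (compHB vB) => eB.
  by rewrite eB comp_refl in zB.
case/connectP=> p hp ->; apply/connectP; exists p => //; exact: pathK.
Qed.

Lemma vr : v != r.
Proof.
apply/negP => /eqP ev; have := vnr; rewrite ev.
by rewrite (subsetP (reach_mono (leq0n m.-1))) // inE.
Qed.

Lemma K_bond : is_bond G K.
Proof.
split; first exact: subset_trans KH nH.1.1.
move=> f fG /eqP; rewrite comp_eqP => c.
have sf := sG fG.
have f1v : f.1 != v.
  apply/negP => /eqP ev; move: c; rewrite ev -compP K1 inE => /eqP e2.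
  by move: sf; rewrite ev e2 ltnn.
have f2v : f.2 != v.
  apply/negP => /eqP ev; move: c; rewrite csym ev -compP K1 inE => /eqP e2.
  by move: sf; rewrite ev e2 ltnn.
have fH : f \in H by rewrite (bond_mem _ nH.1) fG (connect_mono KH c).
by rewrite inE fH f1v f2v.
Qed.

Lemma K_nc : noncrossing (bpart K).
Proof.
case=> B0 [B0' [a [b [c [d [/imsetP [x _ ->] /imsetP [y _ ->] neq [ha hc hb hd] [ab bc cd]]]]]]].
have ea := comp_eq ha; have ec := comp_eq hc; have eb := comp_eq hb; have ed := comp_eq hd.
have [cab|ncab] := boolP (connect (adj H) a b).
  have av : a != v.
    apply/negP => /eqP ev; move: hc; rewrite -ea ev K1 inE => /eqP ce.
    by move: (ltn_trans ab bc); rewrite ce ev ltnn.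
  have bv : b != v.
    apply/negP => /eqP ev; move: hd; rewrite -eb ev K1 inE => /eqP de.
    by move: (ltn_trans bc cd); rewrite de ev ltnn.
  move: neq; rewrite -ea -eb.
  have [aB|aB] := boolP (a \in B).
    have bB : b \in B by rewrite -(compHB aB) compP.
    by rewrite (K2 aB av) (K2 bB bv) eqxx.
  have bB : b \notin B.
    apply/negP => bB; move: aB; rewrite -(compHB bB).
    by rewrite compP csym cab.
  by rewrite (K3 aB) (K3 bB) comp_eqP cab.
apply: nH.2; exists (comp H a), (comp H b), a, b, c, d; split.
- exact: imset_f.
- exact: imset_f.
- by rewrite comp_eqP.
- have cac : connect (adj K) a c by rewrite -compP ea.
  have cbd : connect (adj K) b d by rewrite -compP eb.
  by split; rewrite ?comp_refl // compP; [exact: (connect_mono KH cac) | exact: (connect_mono KH cbd)].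
- by split.
Qed.

Lemma K_merge : bpart H =
  (bpart K :\: [set comp K v; comp K r]) :|: [set comp K v :|: comp K r].
Proof.
apply: merge_img => z.
rewrite K1 (K2 rB (negbT (_ : (r == v) = false))); last by rewrite eq_sym (negbTE vr).
rewrite /= setD1K ?vB //.
have [zv|zv] := eqVneq z v.
  by rewrite zv K1 eqxx /= (compHB vB).
have [zB|zB] := boolP (z \in B).
  by rewrite (K2 zB zv) eqxx orbT (compHB zB).
rewrite (K3 zB).
have -> : (comp H z == [set v]) = false.
  apply/negP => /eqP h; have := comp_refl H z; rewrite h inE.
  by rewrite (negbTE zv).
have -> : (comp H z == B :\ v) = false.
  apply/negP => /eqP h; have := comp_refl H z; rewrite h in_setD1.
  by rewrite (negbTE zB) andbF.
by [].
Qed.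

Lemma K_cc : cc K = (cc H).+1.
Proof.
have neq : comp K v != comp K r.
  have rv : r != v by rewrite eq_sym vr.
  rewrite K1 (K2 rB rv).
  apply/negP => /eqP h; have := set11 v; rewrite h in_setD1 eqxx //.
have [c1 c2] := merge_card (@comp_refl _ K) (@comp_eq _ K)
   (imset_f _ (isT : v \in 'I_n)) (imset_f _ (isT : r \in 'I_n)) neq.
rewrite /cc K_merge -/(bpart K) c1 /cc.
by move: c2; rewrite -/(bpart K); case: #|bpart K| => [|[|k]] //= _.
Qed.

End Down.

Lemma down_step n (G H : edgeset n) : simple_graph G -> inNC G H -> H != set0 ->
  exists K, covers G K H /\ cc K = (cc H).+1.
Proof.
move=> sG nH /set0Pn [e eH].
pose K := K sG nH eH.
have cK : cc K = (cc H).+1 by exact: K_cc.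
have nK : inNC G K by split; [exact: K_bond | exact: K_nc].
exists K; split=> //; split=> //.
  have sKH : K \subset H := KH sG nH eH.
  apply/andP; split=> //; apply/negP => sHK.
  have E : K = H by apply/eqP; rewrite eqEsubset sHK sKH.
  by move: cK; rewrite E; lia.
move=> L nL KL LH.
have := cc_strict nK.1 nL.1 KL; have := cc_strict nL.1 nH.1 LH.
rewrite cK; lia.
Qed.

Lemma arith1 n k : k <= n -> 1 < k -> n - (k - 1) = (n - k).+1.
Proof. lia. Qed.

Section Main.
Variable n : nat.
Variable G : edgeset n.
Hypothesis sG : simple_graph G.

Lemma nproper0 (K : edgeset n) : ~~ (K \proper set0).
Proof. by rewrite properE sub0set andbF. Qed.

Lemma rank_eq rho : is_rank_function G rho -> forall H, inNC G H -> rho H = n - cc H.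
Proof.
case=> r0 rc H; have [k] := ubnP #|H|; elim: k H => // k IH H /ltnSE hk nH.
have [->|ne] := eqVneq H set0.
  rewrite cc0 subnn; apply: r0; first exact: inNC0 sG.
  move=> K _ pK.
  by move: (nproper0 K); rewrite pK.
have [K [cv cK]] := down_step sG nH ne.
have := rc _ _ cv; case: cv => nK _ pKH _.
have Kl : #|K| < #|H| := proper_card pKH.
rewrite (IH K _ nK); last by apply: leq_trans Kl _.
move=> ->; have := cc_le K; rewrite cK; lia.
Qed.

Lemma rank_from_merge :
  (forall H H', covers G H H' -> merges_two_blocks (bpart H) (bpart H')) ->
  is_rank_function G (fun H => n - cc H).
Proof.
move=> hm; split.
  move=> H nH min; have [->|ne] := eqVneq H set0; first by rewrite cc0 subnn.
  by exfalso; apply: (min set0 (inNC0 sG)); rewrite proper0.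
move=> H H' cv; have [B1 [B2 [b1 b2 neq E]]] := hm _ _ cv.
have [c1 c2] := merge_card (@comp_refl _ H) (@comp_eq _ H) b1 b2 neq.
rewrite /cc E c1 -/(bpart H); move: c2; rewrite -/(bpart H).
have := cc_le H; rewrite /cc; exact: arith1.
Qed.

Lemma merge_from_rank : graded G ->
  forall H H', covers G H H' -> merges_two_blocks (bpart H) (bpart H').
Proof.
move=> [rho rk] H H' cv.
have := rk.2 _ _ cv; case: cv => nH nH' pHH' _.
rewrite !(rank_eq rk) // => e1.
have ccH : cc H = (cc H').+1 by have := cc_le H; have := cc_le H'; lia.
case/properP: pHH' => sub [f fH' fH].
set x := f.1; set y := f.2.
have neqc : comp H x != comp H y.
  apply/negP => /eqP exy; have h := nH.1.2 f.
  by have := h (subsetP nH'.1.1 f fH') exy; rewrite (negbTE fH).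
pose g z := if (comp H z == comp H x) || (comp H z == comp H y)
            then comp H x :|: comp H y else comp H z.
have img := @merge_img _ (comp H) g x y (fun z => erefl).
have [c1 c2] := merge_card (@comp_refl _ H) (@comp_eq _ H)
   (imset_f _ (isT : x \in 'I_n)) (imset_f _ (isT : y \in 'I_n)) neqc.
have hxy : comp H' x = comp H' y by apply/eqP; rewrite comp_eqP edge_conn.
have gr z : z \in g z.
  rewrite /g; case: ifP => h; last exact: comp_refl.
  by rewrite in_setU; case/orP: h => /eqP <-; rewrite comp_refl ?orbT.
have gc z w : w \in g z -> g w = g z.
  rewrite /g; case: ifP => h.
    rewrite in_setU => /orP [] /comp_eq ->; by rewrite eqxx ?orbT.
  by move=> /comp_eq ew; rewrite ew h.
have fg z : g z \subset comp H' z.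
  rewrite /g; case: ifP => h; last exact: comp_sub.
  have hz : comp H' z = comp H' x.
    case/orP: h => /eqP h.
      by apply/esym/comp_eq; apply: (subsetP (comp_sub z sub)); rewrite h comp_refl.
    rewrite hxy; by apply/esym/comp_eq; apply: (subsetP (comp_sub z sub)); rewrite h comp_refl.
  apply/subsetP => w; rewrite in_setU hz => /orP [] wi.
    exact: (subsetP (comp_sub x sub) w wi).
  by rewrite hxy; exact: (subsetP (comp_sub y sub) w wi).
have [_ eqf] := refine_lem gr gc (@comp_eq _ H') fg.
have E : bpart H' = [set g z | z in 'I_n].
  apply: eq_imset; apply: eqf.
  rewrite img c1 -/(bpart H) -/(bpart H').
  move: c2 ccH; rewrite -/(bpart H) /cc.
  by move=> _ ->; rewrite subn1.
exists (comp H x), (comp H y); split=> //; try exact: imset_f.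
by rewrite E img.
Qed.

End Main.

Theorem proposition2p10 (n : nat) (G : edgeset n) :
  simple_graph G -> inNC G G ->
  (graded G <->
   (forall H H', covers G H H' -> merges_two_blocks (bpart H) (bpart H'))) /\
  (graded G ->
   is_rank_function G (fun H => n - cc H) /\
   (forall rho, is_rank_function G rho ->
      forall H, inNC G H -> rho H = n - cc H)).
Proof.
move=> sG _.
have hB := rank_from_merge sG; have hC := merge_from_rank sG.
split.
  split; first exact: hC.
  by move=> h; exists (fun H => n - cc H); exact: hB h.
move=> gr; split; first exact: hB (hC gr).
by move=> rho rk H nH; exact: (rank_eq sG rk nH).
Qed.
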